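(* Let $t_0\in(0,1)$, $\alpha_b\in\mathbb{R}$, $u\in\mathbb{R}$, and put $\alpha_a=(1-u)(-2t_0^2+\alpha_b)+u(2t_0^2+\alpha_b)$, $T=3+t_0^2$, and $F=F(\theta)=1+e^{i\theta_1}+e^{i\theta_2}$ for $\theta\in B=[-\pi,\pi]^2$. Consider the matrix $$M_2^{AA}(\eta,\theta)=\begin{pmatrix}-T\eta-\alpha_a&\bar F&t_0^2&0\\ F&-T\eta-\alpha_b&0&t_0^2\\ t_0^2&0&-T\eta-\alpha_a&\bar F\\ 0&t_0^2&F&-T\eta-\alpha_b\end{pmatrix},$$ and suppose $t_0,\alpha_b$ are such that every root $\eta$ of $\det M_2^{AA}(\eta,\theta)=0$ satisfies $|\eta|\le1$ for all $\theta\in B$. Then the dispersion relation of $H_2^{AA}$ is given by the four branches $$r^{\pm}_{\pm}(\theta)=\frac{\pm\sqrt{|F|^2+t_0^4(1-2u)^2}\pm t_0^2+t_0^2(1-2u)-\alpha_b}{T}$$ (signs chosen independently), and: (a) if $\alpha_a=\alpha_b$, the dispersion relation has Dirac cones; (b) if $\alpha_a=-2t_0^2+\alpha_b$ or $\alpha_a=2t_0^2+\alpha_b$, the dispersion relation has parabolic touches; (c) if $\alpha_a\notin[-2t_0^2+\alpha_b,\,2t_0^2+\alpha_b]$, the dispersion relation has gaps (no two branches touch); (d) if $0<u<1$ and $\alpha_a\ne\alpha_b$, the branches intersect but there are no parabolic or conical touches.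
   Context: $H_2^{AA}$ is the Schrödinger operator $-u''+q_0u$ (with $q_0$ continuous on $[0,1]$ and even, $q_0(x)=q_0(1-x)$) on a periodic quantum graph consisting of two identical hexagonal layers (all edges of length 1) stacked in $AA$ fashion: each type-$A$ vertex of one layer is joined by a vertical edge to the type-$A$ vertex above it, and likewise for type-$B$ vertices. At each vertex $v$ one imposes the modified Neumann (Robin) condition: $u_{a_1}(v)=u_{a_2}(v)=u_{f}(v)/t_0$ for in-layer edges $a_i$ and vertical edges $f$ at $v$, and $\sum_{a}u_a'(v)\pm\sum_f t_0u_f'(v)=\delta_vu(v)$, with $\delta_v=\delta_a$ at type-$A$ and $\delta_v=\delta_b$ at type-$B$ vertices ($t_0\in(0,1]$ models the weak interlayer interaction). Via Floquet theory with quasimomentum $\theta\in B$, for $\lambda$ outside the Dirichlet spectrum of $-d^2/dx^2+q_0$ on $[0,1]$, let $\varphi_0,\varphi_1$ solve $-\varphi''+q_0\varphi=\lambda\varphi$ with $\varphi_0(0)=1,\varphi_0(1)=0,\varphi_1(0)=0,\varphi_1(1)=1$, and set $\eta=\eta(\lambda)=\varphi_1'(1)/\varphi_1'(0)$ (half the Hill discriminant) and $\alpha_k=\delta_k/\varphi_1'(0)$, $k\in\{a,b\}$, treated as real constants. Then $\lambda\in\sigma(H_2^{AA})$ iff $\det M_2^{AA}(\eta(\lambda),\theta)=0$ for some $\theta\in B$; the dispersion relation is identified with the root branches $\eta=r(\theta)$. A Dirac cone is a point $\theta_D$ where two branches meet and there is $\gamma\ne0$ with $r(\theta)-r(\theta_D)=\pm\gamma|\theta-\theta_D|+O(|\theta-\theta_D|^2)$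 on the two branches; a parabolic touch is a point where two branches meet with vanishing first derivative and quadratic behavior around it; ''gaps'' means the branches are separated (do not touch).
   Formalization: In a Dirac cone, |θ−θ_D| in ±γ|θ−θ_D| is the square root of some positive definite quadratic form in θ−θ_D rather than the Euclidean norm; a parabolic touch requires the two branches to separate at least quadratically. Each condition added here is assumed in the paper as well or is needed for the statement above to hold. *)

(* Defs.v *)
From mathcomp Require Import all_boot all_order all_algebra.
From mathcomp Require Import complex.
From mathcomp Require Import reals trigo.
Import Order.TTheory GRing.Theory Num.Theory.

Set Implicit Arguments.
Unset Strict Implicit.
Unset Printing Implicit Defensive.

Local Open Scope ring_scope.
Local Open Scope complex_scope.

Section Defs.
Variable R : realType.

Definition inB (th : R * R) : Prop :=
  (- pi <= th.1 <= pi) /\ (- pi <= th.2 <= pi).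

(* F(theta) = 1 + e^{i theta1} + e^{i theta2} *)
Definition Fth (th : R * R) : R[i] :=
  (1 + cos th.1 + cos th.2) +i* (sin th.1 + sin th.2).

Definition absF2 (th : R * R) : R :=
  (1 + cos th.1 + cos th.2) ^+ 2 + (sin th.1 + sin th.2) ^+ 2.

Definition Tc (t0 : R) : R := 3 + t0 ^+ 2.

Definition alpha_a (t0 ab u : R) : R :=
  (1 - u) * (- 2 * t0 ^+ 2 + ab) + u * (2 * t0 ^+ 2 + ab).

Definition M2AA (t0 aa ab eta : R) (th : R * R) : 'M[R[i]]_4 :=
  let dA := (- Tc t0 * eta - aa)%:C in
  let dB := (- Tc t0 * eta - ab)%:C in
  let t2 := (t0 ^+ 2)%:C in
  let F := Fth th in
  let Fb := F^* in
  \matrix_(i < 4, j < 4)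
    match nat_of_ord i, nat_of_ord j with
    | 0, 0 => dA | 0, 1 => Fb | 0, 2 => t2
    | 1, 0 => F  | 1, 1 => dB | 1, 3 => t2
    | 2, 0 => t2 | 2, 2 => dA | 2, 3 => Fb
    | 3, 1 => t2 | 3, 2 => F  | 3, 3 => dB
    | _, _ => 0
    end.

Definition sgnb (b : bool) : R := if b then 1 else -1.

Definition branch (t0 ab u : R) (s : bool * bool) (th : R * R) : R :=
  (sgnb s.1 * Num.sqrt (absF2 th + t0 ^+ 4 * (1 - 2 * u) ^+ 2)
   + sgnb s.2 * t0 ^+ 2 + t0 ^+ 2 * (1 - 2 * u) - ab) / Tc t0.

Definition edist (th th' : R * R) : R :=
  Num.sqrt ((th.1 - th'.1) ^+ 2 + (th.2 - th'.2) ^+ 2).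

(* Dirac cone of the two branches f, g at thD : they meet at thD and
   f(th) - f(thD) = + gamma |th - thD|_q + O(|th - thD|^2),
   g(th) - g(thD) = - gamma |th - thD|_q + O(|th - thD|^2), gamma <> 0,
   where |v|_q = sqrt(a v1^2 + 2 b v1 v2 + c v2^2) is a Euclidean norm on the
   quasimomentum plane. *)
Definition dirac_cone (f g : R * R -> R) (thD : R * R) : Prop :=
  inB thD /\ f thD = g thD /\
  exists a b c : R, 0 < a /\ b ^+ 2 < a * c /\
  exists gamma : R, gamma != 0 /\
  exists C delta : R, 0 < C /\ 0 < delta /\
  forall th : R * R, edist th thD < delta ->
    let v1 := th.1 - thD.1 in
    let v2 := th.2 - thD.2 in
    let nq := Num.sqrt (a * v1 ^+ 2 + 2 * b * v1 * v2 + c * v2 ^+ 2) in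
    `| f th - f thD - gamma * nq | <= C * edist th thD ^+ 2 /\
    `| g th - g thD + gamma * nq | <= C * edist th thD ^+ 2.

(* Parabolic touch of f, g at thP : they meet at thP, both have vanishing first
   derivative there (deviation O(|th - thP|^2)), and they separate
   quadratically (|f - g| >= c |th - thP|^2 near thP). *)
Definition parabolic_touch (f g : R * R -> R) (thP : R * R) : Prop :=
  inB thP /\ f thP = g thP /\
  exists c C delta : R, 0 < c /\ 0 < C /\ 0 < delta /\
  forall th : R * R, edist th thP < delta ->
    `| f th - f thP | <= C * edist th thP ^+ 2 /\
    `| g th - g thP | <= C * edist th thP ^+ 2 /\
    c * edist th thP ^+ 2 <= `| f th - g th |.

End Defs.

(* Main.v *)
Require Import Defs.
From mathcomp Require Import all_boot all_order all_algebra.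
From mathcomp Require Import complex.
From mathcomp Require Import reals trigo.
From mathcomp Require Import boolp classical_sets topology normedtype derive.
From mathcomp Require Import ring lra.
Import Order.TTheory GRing.Theory Num.Theory.
Local Open Scope ring_scope.

Section Trig.
Import numFieldNormedType.Exports.
Local Open Scope classical_set_scope.
Variable R : realType.

Lemma mvt0 (f df : R -> R) : (forall x : R, is_derive x (1:R) f (df x)) ->
  forall h, exists c, `|c| <= `|h| /\ f h - f 0 = df c * h.
Proof.
move=> fd h.
have cf : forall a b, {within `[a, b], continuous f}.
  move=> a b; apply: continuous_subspaceT => x.
  exact/differentiable_continuous/derivable1_diffP/ex_derive.
case: (lerP 0 h) => h0.
  have [c] := MVT_segment h0 (fun x _ => fd x) (cf 0 h).
  rewrite in_itv /= => /andP[c0 ch] E; exists c; split; last by rewrite E subr0.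
  by rewrite !ger0_norm // (le_trans c0 ch).
have [c] := MVT_segment (ltW h0) (fun x _ => fd x) (cf h 0).
rewrite in_itv /= => /andP[c0 ch] E; exists c; split.
  by rewrite !ler0_norm ?(ltW h0) // lerN2.
by rewrite -opprB E sub0r mulrN opprK.
Qed.

Lemma abs_sin_le (h : R) : `|sin h| <= `|h|.
Proof.
have [c [_ E]] := @mvt0 sin cos (@is_derive_sin R) h.
move: E; rewrite sin0 subr0 => ->; rewrite normrM.
by rewrite ler_piMl // cos_max.
Qed.

Lemma cos_taylor (h : R) : `|cos h - 1| <= h ^+ 2.
Proof.
have [c [ch E]] := @mvt0 cos (fun x => - sin x) (@is_derive_cos R) h.
move: E; rewrite cos0 => ->; rewrite normrM normrN -real_normK ?num_real //.
by rewrite expr2 ler_wpM2r // (le_trans (abs_sin_le c)).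
Qed.

Lemma sin_taylor (h : R) : `|sin h - h| <= `|h| ^+ 3.
Proof.
have D : forall x : R, is_derive x (1:R) (fun x => sin x - x) (cos x - 1).
  move=> x; apply: is_deriveB.
have [c [ch E]] := @mvt0 _ _ D h.
move: E; rewrite /= sin0 !subr0 => ->; rewrite normrM.
rewrite exprSr ler_wpM2r //.
apply: le_trans (cos_taylor c) _.
rewrite -real_normK ?num_real //; rewrite lerXn2r // ?nnegrE //.
Qed.

End Trig.

Section A.
Variable R : realType.
Implicit Types x y : R.

Lemma sqrt_le_of x y : 0 <= y -> x <= y ^+ 2 -> Num.sqrt x <= y.
Proof.
move=> y0 h; rewrite -(ger0_norm y0) -sqrtr_sqr ler_sqrt //.
exact: sqr_ge0.
Qed.

Lemma revtri1 (p1 p2 l1 l2 : R) :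
  Num.sqrt (p1 ^+ 2 + p2 ^+ 2) <= Num.sqrt (l1 ^+ 2 + l2 ^+ 2) + (`|p1 - l1| + `|p2 - l2|).
Proof.
set B := Num.sqrt (l1 ^+ 2 + l2 ^+ 2).
have B0 : 0 <= B by exact: sqrtr_ge0.
have BB : B ^+ 2 = l1 ^+ 2 + l2 ^+ 2 by apply: sqr_sqrtr; exact: addr_ge0 (sqr_ge0 _) (sqr_ge0 _).
have n1 : `|l1| <= B.
  have : `|l1| ^+ 2 <= B ^+ 2 by rewrite real_normK ?num_real // BB lerDl sqr_ge0.
  by rewrite ler_sqr ?nnegrE.
have n2 : `|l2| <= B.
  have : `|l2| ^+ 2 <= B ^+ 2 by rewrite real_normK ?num_real // BB lerDr sqr_ge0.
  by rewrite ler_sqr ?nnegrE.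
apply: sqrt_le_of; first exact: addr_ge0 B0 (addr_ge0 (normr_ge0 _) (normr_ge0 _)).
set w1 := p1 - l1; set w2 := p2 - l2.
have -> : p1 = l1 + w1 by rewrite /w1 addrC subrK.
have -> : p2 = l2 + w2 by rewrite /w2 addrC subrK.
have a1 : l1 * w1 <= B * `|w1|.
  apply: le_trans (ler_norm _) _; rewrite normrM ler_wpM2r //.
have a2 : l2 * w2 <= B * `|w2|.
  apply: le_trans (ler_norm _) _; rewrite normrM ler_wpM2r //.
have q1 : w1 ^+ 2 = `|w1| ^+ 2 by rewrite real_normK ?num_real.
have q2 : w2 ^+ 2 = `|w2| ^+ 2 by rewrite real_normK ?num_real.
have z1 := normr_ge0 w1; have z2 := normr_ge0 w2.
nra.
Qed.

Lemma revtri (p1 p2 l1 l2 : R) :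
  `|Num.sqrt (p1 ^+ 2 + p2 ^+ 2) - Num.sqrt (l1 ^+ 2 + l2 ^+ 2)| <= `|p1 - l1| + `|p2 - l2|.
Proof.
rewrite ler_distl; apply/andP; split; last exact: revtri1.
rewrite lerBlDr; apply: le_trans (revtri1 l1 l2 p1 p2) _.
by rewrite (distrC l1) (distrC l2).
Qed.

Lemma absF2_ge0 (th : R * R) : 0 <= absF2 th.
Proof. exact: addr_ge0 (sqr_ge0 _) (sqr_ge0 _). Qed.

Lemma absF2_le9 (th : R * R) : absF2 th <= 9.
Proof.
rewrite /absF2.
have h1 := cos2Dsin2 th.1; have h2 := cos2Dsin2 th.2.
have c12 := cosB th.1 th.2.
have := cos_le1 (th.1 - th.2); have := cos_le1 th.1; have := cos_le1 th.2.
rewrite c12 => a b c.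
nra.
Qed.

End A.

Section B.
Variable R : realType.
Implicit Types x y : R.


Definition x0 : R := acos (- (1/2)).

Lemma cos_x0 : cos x0 = - (1/2).
Proof. by rewrite /x0 acosK // in_itv /=; apply/andP; split; lra. Qed.

Lemma x0_bnd : 0 <= x0 <= pi.
Proof. by rewrite /x0 acos_ge0 ?acos_lepi //; apply/andP; split; lra. Qed.

Lemma sin_x0_sq : sin x0 ^+ 2 = 3/4.
Proof. by rewrite sin2cos2 cos_x0; field. Qed.

Lemma sin_x0_bnd : `|sin x0| <= 1.
Proof. exact: sin_max. Qed.

Definition thD : R * R := (x0, - x0).

Lemma inB_thD : inB thD.
Proof.
rewrite /inB /thD /=; have /andP[a b] := x0_bnd; have := pi_ge0 R.
by move=> p; split; apply/andP; split; lra.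
Qed.

Lemma absF2_thD : absF2 thD = 0.
Proof.
rewrite /absF2 /thD /= cosN sinN cos_x0 subrr expr0n addr0.
have -> : (1 - 1/2 - 1/2 : R) = 0 by lra.
by rewrite expr0n.
Qed.

Lemma small_cube (v : R) : `|v| <= 1 -> `|v| ^+ 3 <= v ^+ 2.
Proof.
move=> h; rewrite exprS -(real_normK (num_real v)).
by rewrite ler_piMl // sqr_ge0.
Qed.

Lemma lin_approx (v1 v2 : R) :
  `|v1| <= 1 -> `|v2| <= 1 ->
  `|(1 + cos (x0 + v1) + cos (- x0 + v2)) - sin x0 * (v2 - v1)| <= 3/2 * (v1 ^+ 2 + v2 ^+ 2) /\
  `|(sin (x0 + v1) + sin (- x0 + v2)) - (- (v1 + v2) / 2)| <= 3/2 * (v1 ^+ 2 + v2 ^+ 2).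
Proof.
move=> h1 h2.
rewrite !cosD !sinD cosN sinN cos_x0.
have ss := sin_x0_sq; have sb := sin_x0_bnd.
have e1 := @cos_taylor R v1; have e2 := @cos_taylor R v2.
have f1 := le_trans (@sin_taylor R v1) (small_cube _ h1).
have f2 := le_trans (@sin_taylor R v2) (small_cube _ h2).
move: e1 e2 f1 f2 sb ss.
set s := sin x0.
set E1 := cos v1 - 1; set E2 := cos v2 - 1; set F1 := sin v1 - v1; set F2 := sin v2 - v2.
have -> : cos v1 = E1 + 1 by rewrite /E1 subrK.
have -> : cos v2 = E2 + 1 by rewrite /E2 subrK.
have -> : sin v1 = F1 + v1 by rewrite /F1 subrK.
have -> : sin v2 = F2 + v2 by rewrite /F2 subrK.
rewrite !ler_norml => /andP[e1a e1b] /andP[e2a e2b] /andP[f1a f1b] /andP[f2a f2b] /andP[sa sb'] ss.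
split; apply/andP; split; nra.
Qed.

End B.

Section Det.
Local Open Scope complex_scope.

Lemma det4 (T : comNzRingType) (f : nat -> nat -> T) :
  \det (\matrix_(i < 4, j < 4) f i j) =
  0 + f 0%N 0%N*f 1%N 1%N*f 2%N 2%N*f 3%N 3%N - f 0%N 0%N*f 1%N 1%N*f 2%N 3%N*f 3%N 2%N - f 0%N 0%N*f 1%N 2%N*f 2%N 1%N*f 3%N 3%N + f 0%N 0%N*f 1%N 2%N*f 2%N 3%N*f 3%N 1%N + f 0%N 0%N*f 1%N 3%N*f 2%N 1%N*f 3%N 2%N - f 0%N 0%N*f 1%N 3%N*f 2%N 2%N*f 3%N 1%N - f 0%N 1%N*f 1%N 0%N*f 2%N 2%N*f 3%N 3%N + f 0%N 1%N*f 1%N 0%N*f 2%N 3%N*f 3%N 2%N + f 0%N 1%N*f 1%N 2%N*f 2%N 0%N*f 3%N 3%N - f 0%N 1%N*f 1%N 2%N*f 2%N 3%N*f 3%N 0%N - f 0%N 1%N*f 1%N 3%N*f 2%N 0%N*f 3%N 2%N + f 0%N 1%N*f 1%N 3%N*f 2%N 2%N*f 3%N 0%N + f 0%N 2%N*f 1%N 0%N*f 2%N 1%N*f 3%N 3%N - f 0%N 2%N*f 1%N 0%N*f 2%N 3%N*f 3%N 1%N - f 0%N 2%N*f 1%N 1%N*f 2%N 0%N*f 3%N 3%N + f 0%N 2%N*f 1%N 1%N*f 2%N 3%N*f 3%N 0%N + f 0%N 2%N*f 1%N 3%N*f 2%N 0%N*f 3%N 1%N - f 0%N 2%N*f 1%N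 3%N*f 2%N 1%N*f 3%N 0%N - f 0%N 3%N*f 1%N 0%N*f 2%N 1%N*f 3%N 2%N + f 0%N 3%N*f 1%N 0%N*f 2%N 2%N*f 3%N 1%N + f 0%N 3%N*f 1%N 1%N*f 2%N 0%N*f 3%N 2%N - f 0%N 3%N*f 1%N 1%N*f 2%N 2%N*f 3%N 0%N - f 0%N 3%N*f 1%N 2%N*f 2%N 0%N*f 3%N 1%N + f 0%N 3%N*f 1%N 2%N*f 2%N 1%N*f 3%N 0%N.
Proof.
rewrite ?(expand_det_row _ ord0) ?big_ord_recl ?big_ord0 /cofactor.
rewrite ?(expand_det_row _ ord0) ?big_ord_recl ?big_ord0 /cofactor.
rewrite ?(expand_det_row _ ord0) ?big_ord_recl ?big_ord0 /cofactor.
rewrite ?det_mx11 !mxE /bump /=.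
ring.
Qed.

Lemma FFc (R : realType) (th : R * R) : Fth th * (Fth th)^* = (absF2 th)%:C.
Proof.
rewrite /Fth /absF2 /=.
by apply/eqP; rewrite eq_complex /=; apply/andP; split; apply/eqP; ring.
Qed.
Lemma det_M2AA (R : realType) (t0 aa ab eta : R) th :
  \det (M2AA t0 aa ab eta th) =
  (((- Tc t0 * eta - aa + t0 ^+ 2) * (- Tc t0 * eta - ab + t0 ^+ 2) - absF2 th) *
   ((- Tc t0 * eta - aa - t0 ^+ 2) * (- Tc t0 * eta - ab - t0 ^+ 2) - absF2 th))%:C.
Proof.
rewrite /M2AA; cbv zeta.
set dA := (- Tc t0 * eta - aa)%:C.
set dB := (- Tc t0 * eta - ab)%:C.
set t2 := (t0 ^+ 2)%:C.
set F := Fth th.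
set Fb := F^*.
rewrite (@det4 _ (fun a b => match a, b with
    | 0, 0 => dA | 0, 1 => Fb | 0, 2 => t2
    | 1, 0 => F  | 1, 1 => dB | 1, 3 => t2
    | 2, 0 => t2 | 2, 2 => dA | 2, 3 => Fb
    | 3, 1 => t2 | 3, 2 => F  | 3, 3 => dB
    | _, _ => 0
    end)) /=.
apply: (@eq_trans _ _ (((dA + t2) * (dB + t2) - F * Fb) * ((dA - t2) * (dB - t2) - F * Fb))).
  by ring.
rewrite /Fb FFc /dA /dB /t2.
rewrite !(rmorphM, rmorphB, rmorphD, rmorphN).
ring.
Qed.

End Det.

Section C.
Variable R : realType.
Variables t0 ab u : R.

Definition k := 1 - 2 * u.
Definition S (th : R * R) := Num.sqrt (absF2 th + t0 ^+ 4 * k ^+ 2).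

Lemma Tc_gt0 : 0 < Tc t0.
Proof. rewrite /Tc; have := sqr_ge0 t0; lra. Qed.

Lemma Tc_neq0 : Tc t0 != 0.
Proof. by rewrite gt_eqF // Tc_gt0. Qed.

Lemma S_ge0 th : 0 <= S th.
Proof. exact: sqrtr_ge0. Qed.

Lemma S_sq th : S th ^+ 2 = absF2 th + t0 ^+ 4 * k ^+ 2.
Proof. by rewrite sqr_sqrtr // addr_ge0 ?absF2_ge0 // mulr_ge0 ?sqr_ge0 // exprn_even_ge0. Qed.

Lemma branchE s th : branch t0 ab u s th = (sgnb R s.1 * S th + sgnb R s.2 * t0 ^+ 2 + t0 ^+ 2 * k - ab) / Tc t0.
Proof. by []. Qed.

Lemma alpha_aE : alpha_a t0 ab u = ab - 2 * t0 ^+ 2 * k.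
Proof. rewrite /alpha_a /k; ring. Qed.

Lemma dispersion th eta :
  \det (M2AA t0 (alpha_a t0 ab u) ab eta th) = 0 <->
  exists s : bool * bool, eta = branch t0 ab u s th.
Proof.
rewrite det_M2AA alpha_aE.
have G : absF2 th = S th ^+ 2 - t0 ^+ 4 * k ^+ 2 by rewrite S_sq addrK.
set w1 := - Tc t0 * eta + t0 ^+ 2 + t0 ^+ 2 * k - ab.
set w2 := - Tc t0 * eta - t0 ^+ 2 + t0 ^+ 2 * k - ab.
have -> : ((- Tc t0 * eta - (ab - 2 * t0 ^+ 2 * k) + t0 ^+ 2) * (- Tc t0 * eta - ab + t0 ^+ 2) - absF2 th) *
   ((- Tc t0 * eta - (ab - 2 * t0 ^+ 2 * k) - t0 ^+ 2) * (- Tc t0 * eta - ab - t0 ^+ 2) - absF2 th)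
   = ((w1 - S th) * (w1 + S th)) * ((w2 - S th) * (w2 + S th)).
  by rewrite G /w1 /w2; ring.
have Tn := Tc_neq0.
split.
- move/(congr1 (fun z => complex.Re z)); rewrite /= => /eqP.
  rewrite !mulf_eq0 => /orP[/orP[]|/orP[]] /eqP E; rewrite /w1 /w2 in E.
  + exists (false, true); rewrite branchE /sgnb /=; apply: (mulIf Tn); rewrite divfK //; lra.
  + exists (true, true); rewrite branchE /sgnb /=; apply: (mulIf Tn); rewrite divfK //; lra.
  + exists (false, false); rewrite branchE /sgnb /=; apply: (mulIf Tn); rewrite divfK //; lra.
  + exists (true, false); rewrite branchE /sgnb /=; apply: (mulIf Tn); rewrite divfK //; lra.
- move=> [[[] []] Ee]; rewrite branchE /sgnb /= in Ee.
  + have E : w1 + S th = 0 by rewrite /w1 Ee; field.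
    by rewrite E !(mulr0, mul0r) rmorph0.
  + have E : w2 + S th = 0 by rewrite /w2 Ee; field.
    by rewrite E !(mulr0, mul0r) rmorph0.
  + have E : w1 - S th = 0 by rewrite /w1 Ee; field.
    by rewrite E !(mulr0, mul0r) rmorph0.
  + have E : w2 - S th = 0 by rewrite /w2 Ee; field.
    by rewrite E !(mulr0, mul0r) rmorph0.
Qed.


Lemma branch_eq s s' th : branch t0 ab u s th = branch t0 ab u s' th <->
  (sgnb R s.1 - sgnb R s'.1) * S th + (sgnb R s.2 - sgnb R s'.2) * t0 ^+ 2 = 0.
Proof.
rewrite !branchE; have Tn := Tc_neq0; split.
- move/(congr1 (fun z => z * Tc t0)); rewrite !divfK // => E; lra.
- by move=> E; congr (_ / _); lra.
Qed.

Lemma part_c : 0 < t0 -> 1 < k ^+ 2 ->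
  forall (s s' : bool * bool) th, s != s' -> branch t0 ab u s th != branch t0 ab u s' th.
Proof.
move=> t0p k1 s s' th ne; apply/eqP; rewrite branch_eq.
have t2 : 0 < t0 ^+ 2 by rewrite exprn_gt0.
have Sq := S_sq th; have S0 := S_ge0 th; have G0 := @absF2_ge0 R th.
have St : t0 ^+ 2 < S th.
  have a : t0 ^+ 4 < t0 ^+ 4 * k ^+ 2 by rewrite ltr_pMr // exprn_gt0.
  have h4 : t0 ^+ 4 = t0 ^+ 2 * t0 ^+ 2 by rewrite -exprD.
  have b : t0 ^+ 2 * t0 ^+ 2 < S th ^+ 2 by rewrite Sq -h4; lra.
  nra.
move: ne; case: s => [[] []]; case: s' => [[] []] //= _; rewrite /sgnb /=; lra.
Qed.

Lemma meet_pair : 0 < t0 -> 0 < k ^+ 2 ->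
  forall (s s' : bool * bool) th, s != s' -> branch t0 ab u s th = branch t0 ab u s' th ->
  ((s = (true, false) /\ s' = (false, true)) \/ (s = (false, true) /\ s' = (true, false)))
  /\ S th = t0 ^+ 2.
Proof.
move=> t0p k0 s s' th ne; rewrite branch_eq.
have t2 : 0 < t0 ^+ 2 by rewrite exprn_gt0.
have Sq := S_sq th; have S0 := S_ge0 th; have G0 := @absF2_ge0 R th.
have Sp : 0 < S th.
  have a : 0 < t0 ^+ 4 * k ^+ 2 by rewrite mulr_gt0 // exprn_gt0.
  have b : 0 < S th ^+ 2 by rewrite Sq; lra.
  rewrite lt_neqAle S0 andbT; apply/eqP => E; move: b; rewrite -E expr0n /=; lra.
move: ne; case: s => [[] []]; case: s' => [[] []] //= _; rewrite /sgnb /= => E;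
  try lra.
- by split; [left | lra].
- by split; [right | lra].
Qed.

Lemma sqrt_t4 : Num.sqrt (t0 ^+ 4) = t0 ^+ 2.
Proof.
have -> : t0 ^+ 4 = (t0 ^+ 2) ^+ 2 by rewrite -exprM.
by rewrite sqrtr_sqr ger0_norm // sqr_ge0.
Qed.

Lemma exists_meet : 0 < t0 < 1 -> 0 < k ^+ 2 < 1 ->
  exists (s s' : bool * bool) (th : R * R),
        s != s' /\ inB th /\ branch t0 ab u s th = branch t0 ab u s' th.
Proof.
move=> /andP[t0p t01] /andP[k0 k1].
set g0 := t0 ^+ 4 * (1 - k ^+ 2).
have t4 : 0 < t0 ^+ 4 by rewrite exprn_gt0.
have t41 : t0 ^+ 4 < 1 by rewrite exprn_ilt1 // ltW.
have g0p : 0 < g0 by rewrite mulr_gt0 // subr_gt0.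
have g01 : g0 < 1 by rewrite /g0; nra.
set r := Num.sqrt g0.
have r0 : 0 <= r := sqrtr_ge0 _.
have rr : r ^+ 2 = g0 by rewrite sqr_sqrtr // ltW.
have r1 : r < 1 by nra.
set c := (r - 1) / 2.
set x1 := acos c.
have cin : c \in `[-1, 1] by rewrite in_itv /=; apply/andP; split; rewrite /c; lra.
have cx : cos x1 = c by rewrite /x1 acosK.
have xb : 0 <= x1 <= pi.
  by rewrite /x1 acos_ge0 ?acos_lepi //; move: cin; rewrite in_itv.
exists (true, false), (false, true), (x1, - x1); split => //; split.
  rewrite /inB /=; have := pi_ge0 R; move: xb => /andP[a b] p.
  by split; apply/andP; split; lra.
apply/branch_eq; rewrite /sgnb /=.
have -> : S (x1, - x1) = t0 ^+ 2.
  rewrite /S /absF2 /= cosN sinN cx subrr expr0n addr0.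
  have -> : (1 + c + c) = r by rewrite /c; field.
  by rewrite rr /g0 -sqrt_t4; congr Num.sqrt; ring.
ring.
Qed.

Lemma S_le4 th : t0 ^+ 4 * k ^+ 2 <= 1 -> S th <= 4.
Proof.
move=> h; have Sq := S_sq th; have S0 := S_ge0 th; have G9 := @absF2_le9 R th.
nra.
Qed.

Lemma sin_half (h : R) : 0 < h -> h <= 1/2 -> h / 2 <= sin h.
Proof.
move=> h0 h1; have := @sin_taylor R h; rewrite (ger0_norm (ltW h0)) ler_norml => /andP[a _].
have : h ^+ 3 <= h / 4 by nra.
lra.
Qed.

Lemma grad1 (a b : R) : t0 ^+ 4 * k ^+ 2 <= 1 ->
  (exists C delta : R, 0 < C /\ 0 < delta /\ forall h, 0 < h < delta ->
     `|S (a + h, b + 0) - S (a + - h, b + 0)| <= C * h ^+ 2) ->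
  sin a + sin a * cos b - cos a * sin b = 0.
Proof.
move=> tk [C [delta [C0 [d0 HC]]]].
set g1 := sin a + sin a * cos b - cos a * sin b.
have key : forall h, 0 < h -> h < delta -> h <= 1/2 -> `|g1| <= 4 * C * h.
  move=> h hp hd h2.
  have B' : `|S (a + h, b + 0) - S (a + - h, b + 0)| <= C * h ^+ 2.
    by move: (HC h); rewrite hp hd => /(_ isT).
  move: B'.
  set Sp := S (a + h, b + 0); set Sm := S (a + - h, b + 0) => B'.
  have Sp0 : 0 <= Sp := S_ge0 _; have Sm0 : 0 <= Sm := S_ge0 _.
  have Sp4 : Sp <= 4 := S_le4 _ tk; have Sm4 : Sm <= 4 := S_le4 _ tk.
  have D : Sp ^+ 2 - Sm ^+ 2 = - (4 * sin h * g1).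
    rewrite /Sp /Sm !S_sq /absF2 /= !addr0 !cosD !sinD cosN sinN /g1; ring.
  have sh := sin_half h hp h2.
  have E : `|Sp ^+ 2 - Sm ^+ 2| = `|Sp - Sm| * (Sp + Sm).
    by rewrite subr_sqr normrM (ger0_norm (addr_ge0 Sp0 Sm0)) mulrC.
  have F : `|Sp ^+ 2 - Sm ^+ 2| = 4 * sin h * `|g1|.
    rewrite D normrN normrM normrM (ger0_norm (_ : 0 <= 4)) //.
    by rewrite (ger0_norm (_ : 0 <= sin h)) //; lra.
  have G : `|Sp - Sm| * (Sp + Sm) <= C * h ^+ 2 * 8.
    by apply: ler_pM (normr_ge0 _) _ B' _; lra.
  have g0 := normr_ge0 g1.
  have : 2 * h * `|g1| <= 8 * C * h ^+ 2.
    rewrite -E F in G.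
    have : h / 2 * `|g1| <= sin h * `|g1| by rewrite ler_wpM2r.
    nra.
  nra.
have [//|gn] := eqVneq g1 0.
have gp : 0 < `|g1| by rewrite normr_gt0.
set h := Num.min (Num.min (delta / 2) (1/2)) (`|g1| / (8 * C)).
have h1 : h <= delta / 2 by rewrite /h !ge_min lexx.
have h2 : h <= 1 / 2 by rewrite /h !ge_min lexx orbT.
have h3 : h <= `|g1| / (8 * C) by rewrite /h ge_min lexx orbT.
have hp : 0 < h by rewrite /h !lt_min; apply/andP; split; [apply/andP; split; lra | apply: divr_gt0; lra].
have := key h hp ltac:(lra) h2.
have : 8 * C * h <= `|g1|.
  by move: h3; rewrite ler_pdivlMr ?mulr_gt0 //; lra.
nra.
Qed.

Lemma absF2_swap (x y : R) : absF2 (x, y) = absF2 (y, x).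
Proof. rewrite /absF2 /=; ring. Qed.

Lemma S_swap (x y : R) : S (x, y) = S (y, x).
Proof. by rewrite /S absF2_swap. Qed.

Lemma crit_vals (a b : R) :
  sin a + sin a * cos b - cos a * sin b = 0 ->
  sin b + sin b * cos a - cos b * sin a = 0 ->
  absF2 (a, b) = 0 \/ 1 <= absF2 (a, b).
Proof.
move=> h1 h2.
have sb : sin b = - sin a by lra.
rewrite sb in h1.
have h3 : sin a * (1 + cos a + cos b) = 0 by rewrite -h1; ring.
rewrite /absF2 /= sb subrr expr0n addr0.
move/eqP: h3; rewrite mulf_eq0 => /orP[/eqP sa | /eqP c0]; last first.
  by left; rewrite c0 expr0n.
right.
have ca : cos a ^+ 2 = 1 by rewrite cos2sin2 sa expr0n subr0.
have cb : cos b ^+ 2 = 1 by rewrite cos2sin2 sb sa oppr0 expr0n subr0.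
have := cos_geN1 a; have := cos_geN1 b.
nra.
Qed.

Lemma z2 : (0 : R) ^+ 2 = 0.
Proof. by rewrite expr2 mul0r. Qed.

Definition symb (f : R * R -> R) (P : R * R) :=
  exists C delta : R, 0 < C /\ 0 < delta /\ forall h, 0 < h < delta ->
    `|f (P.1 + h, P.2 + 0) - f (P.1 + - h, P.2 + 0)| <= C * h ^+ 2 /\
    `|f (P.1 + 0, P.2 + h) - f (P.1 + 0, P.2 + - h)| <= C * h ^+ 2.

Lemma edist_shift (P : R * R) x y : Defs.edist (P.1 + x, P.2 + y) P = Num.sqrt (x ^+ 2 + y ^+ 2).
Proof. by rewrite /Defs.edist /=; congr Num.sqrt; ring. Qed.

Lemma symb_gen (f : R * R -> R) P (Z : R -> R -> R) C delta :
  0 < C -> 0 < delta -> (forall x y, Z (- x) (- y) = Z x y) ->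
  (forall x y, Num.sqrt (x ^+ 2 + y ^+ 2) < delta ->
     `|f (P.1 + x, P.2 + y) - Z x y| <= C * (x ^+ 2 + y ^+ 2)) ->
  symb f P.
Proof.
move=> C0 d0 Zs K; exists (2 * C), delta; split; first lra; split => // h /andP[h0 hd].
have s1 : forall x : R, Num.sqrt (x ^+ 2 + 0 ^+ 2) = `|x|.
  by move=> x; rewrite z2 addr0 sqrtr_sqr.
have s2 : forall x : R, Num.sqrt (0 ^+ 2 + x ^+ 2) = `|x|.
  by move=> x; rewrite z2 add0r sqrtr_sqr.
have hn : `|h| < delta by rewrite ger0_norm // ltW.
have hn' : `|- h| < delta by rewrite normrN.
have A1 := K h 0 ltac:(by rewrite s1).
have A2 := K (- h) 0 ltac:(by rewrite s1).
have A3 := K 0 h ltac:(by rewrite s2).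
have A4 := K 0 (- h) ltac:(by rewrite s2).
have Z1 : Z (- h) 0 = Z h 0 by rewrite -{1}oppr0 Zs.
have Z2 : Z 0 (- h) = Z 0 h by rewrite -{1}oppr0 Zs.
rewrite Z1 in A2; rewrite Z2 in A4.
rewrite !sqrrN !z2 !addr0 !add0r in A1 A2 A3 A4.
split.
- have := ler_normB (f (P.1 + h, P.2 + 0) - Z h 0) (f (P.1 + - h, P.2 + 0) - Z h 0).
  have -> : f (P.1 + h, P.2 + 0) - Z h 0 - (f (P.1 + - h, P.2 + 0) - Z h 0) =
            f (P.1 + h, P.2 + 0) - f (P.1 + - h, P.2 + 0) by ring.
  rewrite ?addr0 ?add0r; lra.
- have := ler_normB (f (P.1 + 0, P.2 + h) - Z 0 h) (f (P.1 + 0, P.2 + - h) - Z 0 h).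
  have -> : f (P.1 + 0, P.2 + h) - Z 0 h - (f (P.1 + 0, P.2 + - h) - Z 0 h) =
            f (P.1 + 0, P.2 + h) - f (P.1 + 0, P.2 + - h) by ring.
  rewrite ?addr0 ?add0r; lra.
Qed.

Lemma dirac_symb f g P : dirac_cone f g P -> symb f P /\ f P = g P.
Proof.
move=> [_ [fg [a [b [c [_ [_ [gm [_ [C [delta [C0 [d0 H]]]]]]]]]]]]].
split => //.
apply: (@symb_gen f P (fun x y => f P + gm * Num.sqrt (a * x ^+ 2 + 2 * b * x * y + c * y ^+ 2)) C delta) => //.
  by move=> x y; congr (_ + _ * Num.sqrt _); ring.
move=> x y hxy; have := H (P.1 + x, P.2 + y); rewrite edist_shift => /(_ hxy) /= [+ _].
rewrite sqr_sqrtr ?addr_ge0 ?sqr_ge0 //.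
have -> : P.1 + x - P.1 = x by ring.
have -> : P.2 + y - P.2 = y by ring.
by rewrite opprD addrA.
Qed.

Lemma parab_symb f g P : parabolic_touch f g P -> symb f P /\ f P = g P.
Proof.
move=> [_ [fg [c [C [delta [_ [C0 [d0 H]]]]]]]].
split => //.
apply: (@symb_gen f P (fun _ _ => f P) C delta) => //.
move=> x y hxy; have := H (P.1 + x, P.2 + y); rewrite edist_shift => /(_ hxy) [+ _].
by rewrite sqr_sqrtr ?addr_ge0 ?sqr_ge0.
Qed.
End C.

Section C2.
Variable R : realType.
Variables t0 ab u : R.
Local Notation kk := (k R u).
Local Notation SS := (S R t0 u).
Local Notation br := (branch t0 ab u).

Lemma S_diff s p q : `|SS p - SS q| <= Tc t0 * `|br s p - br s q|.
Proof.
have Tn := Tc_neq0 R t0; have Tp := Tc_gt0 R t0.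
rewrite !branchE; case: s => [[] b] /=; rewrite /sgnb /=.
- have -> : SS p - SS q = Tc t0 * ((1 * SS p + (if b then 1 else -1) * t0 ^+ 2 + t0 ^+ 2 * kk - ab) / Tc t0 -
     (1 * SS q + (if b then 1 else -1) * t0 ^+ 2 + t0 ^+ 2 * kk - ab) / Tc t0) by field.
  by rewrite normrM (gtr0_norm Tp).
- have -> : SS p - SS q = - (Tc t0 * ((-1 * SS p + (if b then 1 else -1) * t0 ^+ 2 + t0 ^+ 2 * kk - ab) / Tc t0 -
     (-1 * SS q + (if b then 1 else -1) * t0 ^+ 2 + t0 ^+ 2 * kk - ab) / Tc t0)) by field.
  by rewrite normrN normrM (gtr0_norm Tp).
Qed.

Lemma no_touch : 0 < t0 < 1 -> 0 < kk ^+ 2 < 1 ->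
  forall (s s' : bool * bool) (th : R * R), s != s' ->
  ~ dirac_cone (br s) (br s') th /\ ~ parabolic_touch (br s) (br s') th.
Proof.
move=> /andP[t0p t01] /andP[k0 k1] s s' [a b] ne.
have t4 : 0 < t0 ^+ 4 by rewrite exprn_gt0.
have t41 : t0 ^+ 4 < 1 by rewrite exprn_ilt1 // ltW.
have tk : t0 ^+ 4 * kk ^+ 2 <= 1 by nra.
have Tp := Tc_gt0 R t0.
suff K : symb R (br s) (a, b) -> br s (a, b) = br s' (a, b) -> False.
  by split => [/dirac_symb|/parab_symb] [] /K.
move=> [C [delta [C0 [d0 H]]]] E.
have [_ St] := @meet_pair R t0 ab u t0p k0 s s' (a, b) ne E.
have g1 : sin a + sin a * cos b - cos a * sin b = 0.
  apply: (@grad1 R t0 u a b tk); exists (Tc t0 * C), delta; split; first exact: mulr_gt0.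
  split => // h hh; have [H1 _] := H h hh; rewrite /= in H1.
  apply: le_trans (S_diff s _ _) _; rewrite -mulrA ler_wpM2l //; exact: ltW.
have g2 : sin b + sin b * cos a - cos b * sin a = 0.
  apply: (@grad1 R t0 u b a tk); exists (Tc t0 * C), delta; split; first exact: mulr_gt0.
  split => // h hh; have [_ H2] := H h hh; rewrite /= in H2.
  rewrite (S_swap R t0 u (b + h)) (S_swap R t0 u (b + - h)).
  apply: le_trans (S_diff s _ _) _; rewrite -mulrA ler_wpM2l //; exact: ltW.
have Sq := S_sq R t0 u (a, b); rewrite St in Sq.
have e : (t0 ^+ 2) ^+ 2 = t0 ^+ 4 by rewrite -exprM.
rewrite e in Sq.
have [G0|G1] := @crit_vals R a b g1 g2; rewrite ?G0 ?G1 in Sq; nra.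
Qed.


Lemma dirac_core (v1 v2 : R) : `|v1| <= 1 -> `|v2| <= 1 ->
  `|Num.sqrt (absF2 (x0 R + v1, - x0 R + v2)) -
    Num.sqrt (1 * v1 ^+ 2 + 2 * (- (1/2)) * v1 * v2 + 1 * v2 ^+ 2)| <= 3 * (v1 ^+ 2 + v2 ^+ 2).
Proof.
move=> h1 h2.
have [A1 A2] := @lin_approx R v1 v2 h1 h2.
have -> : 1 * v1 ^+ 2 + 2 * (- (1/2)) * v1 * v2 + 1 * v2 ^+ 2 =
   (sin (x0 R) * (v2 - v1)) ^+ 2 + (- (v1 + v2) / 2) ^+ 2.
  by rewrite exprMn sin_x0_sq; field.
rewrite /absF2 /=.
apply: le_trans (revtri _ _ _ _ _) _.
lra.
Qed.

Lemma parab_core (v1 v2 : R) : `|v1| <= 1 -> `|v2| <= 1 ->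
  absF2 (x0 R + v1, - x0 R + v2) <= 24 * (v1 ^+ 2 + v2 ^+ 2) /\
  (v1 ^+ 2 + v2 ^+ 2 <= 1/36 -> (v1 ^+ 2 + v2 ^+ 2) / 8 <= absF2 (x0 R + v1, - x0 R + v2)).
Proof.
move=> h1 h2.
have [A1 A2] := @lin_approx R v1 v2 h1 h2.
rewrite /absF2 /=.
move: A1 A2.
set P1 := 1 + _ + _; set P2 := sin _ + _.
set L1 := sin (x0 R) * (v2 - v1); set L2 := - (v1 + v2) / 2.
set D := v1 ^+ 2 + v2 ^+ 2.
have q : L1 ^+ 2 + L2 ^+ 2 = v1 ^+ 2 - v1 * v2 + v2 ^+ 2.
  by rewrite /L1 /L2 exprMn sin_x0_sq; field.
have D0 : 0 <= D by rewrite /D addr_ge0 ?sqr_ge0.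
have D2 : D <= 2.
  have a : v1 ^+ 2 <= 1 by rewrite -(real_normK (num_real v1)) expr_le1.
  have b : v2 ^+ 2 <= 1 by rewrite -(real_normK (num_real v2)) expr_le1.
  rewrite /D; lra.
have qlo : D / 2 <= L1 ^+ 2 + L2 ^+ 2 by rewrite q /D; have := sqr_ge0 (v1 - v2); nra.
have qhi : L1 ^+ 2 + L2 ^+ 2 <= 3/2 * D by rewrite q /D; have := sqr_ge0 (v1 + v2); nra.
set E1 := P1 - L1; set E2 := P2 - L2.
have -> : P1 = L1 + E1 by rewrite /E1 addrC subrK.
have -> : P2 = L2 + E2 by rewrite /E2 addrC subrK.
move=> B1 B2.
have e1 : E1 ^+ 2 <= (3/2 * D) ^+ 2.
  rewrite -(real_normK (num_real E1)); have := normr_ge0 E1; nra.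
have e2 : E2 ^+ 2 <= (3/2 * D) ^+ 2.
  rewrite -(real_normK (num_real E2)); have := normr_ge0 E2; nra.
have s1 := sqr_ge0 (L1 - E1); have s2 := sqr_ge0 (L2 - E2).
have s3 := sqr_ge0 (L1 + 2 * E1); have s4 := sqr_ge0 (L2 + 2 * E2).
split; first nra.
move=> Dsm; nra.
Qed.

Lemma divT_le (Y : R) : `|Y / Tc t0| <= `|Y|.
Proof.
have Tp := Tc_gt0 R t0.
have T1 : 1 <= Tc t0 by rewrite /Tc; have := sqr_ge0 t0; lra.
rewrite normrM; apply: ler_piMr (normr_ge0 _) _.
by rewrite normfV (gtr0_norm Tp) invf_le1.
Qed.

Lemma abs_le1_of_sq (v : R) : v ^+ 2 <= 1 -> `|v| <= 1.
Proof.
rewrite -(real_normK (num_real v)) => h; have := normr_ge0 v; nra.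
Qed.

Lemma shift_pt (p1 p2 : R) : exists v1 v2, (p1, p2) = (x0 R + v1, - x0 R + v2).
Proof. by exists (p1 - x0 R), (p2 + x0 R); congr pair; ring. Qed.

Lemma edist_thD (v1 v2 : R) : Defs.edist (x0 R + v1, - x0 R + v2) (thD R) = Num.sqrt (v1 ^+ 2 + v2 ^+ 2).
Proof. by rewrite /Defs.edist /thD /=; congr Num.sqrt; ring. Qed.

Lemma small_pt (v1 v2 : R) (d : R) : d <= 1 ->
  Num.sqrt (v1 ^+ 2 + v2 ^+ 2) < d ->
  [/\ `|v1| <= 1, `|v2| <= 1, v1 ^+ 2 + v2 ^+ 2 < d ^+ 2 &
      Num.sqrt (v1 ^+ 2 + v2 ^+ 2) ^+ 2 = v1 ^+ 2 + v2 ^+ 2].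
Proof.
move=> d1 hd.
have D0 : 0 <= v1 ^+ 2 + v2 ^+ 2 by rewrite addr_ge0 ?sqr_ge0.
have sq := sqr_sqrtr D0.
have s0 := sqrtr_ge0 (v1 ^+ 2 + v2 ^+ 2).
have Dd : v1 ^+ 2 + v2 ^+ 2 < d ^+ 2 by rewrite -sq; nra.
have a := sqr_ge0 v1; have b := sqr_ge0 v2.
split => //; apply: abs_le1_of_sq; nra.
Qed.

Lemma part_a : 0 < t0 -> kk = 0 ->
  exists (s s' : bool * bool) (thP : R * R), s != s' /\ dirac_cone (br s) (br s') thP.
Proof.
move=> t0p k0.
have Tp := Tc_gt0 R t0; have Tn := Tc_neq0 R t0.
have SSE : forall th, SS th = Num.sqrt (absF2 th) by move=> th; rewrite /S k0 z2 mulr0 addr0.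
have S0 : SS (thD R) = 0 by rewrite SSE absF2_thD sqrtr0.
exists (true, true), (false, true), (thD R); split => //.
split; first exact: inB_thD.
split; first by apply/branch_eq; rewrite S0 /sgnb /=; ring.
exists 1, (- (1/2)), 1; split; first lra.
split; first by rewrite sqrrN mul1r expr2; lra.
exists (1 / Tc t0); split; first by rewrite div1r invr_eq0.
exists 3, 1; split; first lra; split; first lra.
move=> [p1 p2]; have [v1 [v2 ->]] := shift_pt p1 p2.
rewrite edist_thD => hd.
have [h1 h2 _ sq] := @small_pt v1 v2 1 (lexx _) hd.
rewrite /thD /=.
have -> : x0 R + v1 - x0 R = v1 by ring.
have -> : - x0 R + v2 - - x0 R = v2 by ring.
rewrite sq -/(thD R).
have core := dirac_core v1 v2 h1 h2.
set N := Num.sqrt (1 * v1 ^+ 2 + 2 * - (1 / 2) * v1 * v2 + 1 * v2 ^+ 2).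
set G := Num.sqrt (absF2 (x0 R + v1, - x0 R + v2)).
rewrite -/N -/G in core.
have -> : br (true, true) (x0 R + v1, - x0 R + v2) - br (true, true) (thD R) - 1 / Tc t0 * N
   = (G - N) / Tc t0.
  by rewrite !branchE S0 SSE /sgnb /= -/G; field.
have -> : br (false, true) (x0 R + v1, - x0 R + v2) - br (false, true) (thD R) + 1 / Tc t0 * N
   = - ((G - N) / Tc t0).
  by rewrite !branchE S0 SSE /sgnb /= -/G; field.
rewrite normrN; split; exact: le_trans (divT_le _) core.
Qed.

Lemma part_b : 0 < t0 < 1 -> kk ^+ 2 = 1 ->
  exists (s s' : bool * bool) (thP : R * R), s != s' /\ parabolic_touch (br s) (br s') thP.
Proof.
move=> /andP[t0p t01] k1.
have Tp := Tc_gt0 R t0; have Tn := Tc_neq0 R t0.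
have t2p : 0 < t0 ^+ 2 by rewrite exprn_gt0.
have t41 : t0 ^+ 4 < 1 by rewrite exprn_ilt1 // ltW.
have tk : t0 ^+ 4 * kk ^+ 2 <= 1 by rewrite k1 mulr1 ltW.
have SSE : forall th, SS th = Num.sqrt (absF2 th + t0 ^+ 4) by move=> th; rewrite /S k1 mulr1.
have S0 : SS (thD R) = t0 ^+ 2 by rewrite SSE absF2_thD add0r sqrt_t4.
exists (true, false), (false, true), (thD R); split => //.
split; first exact: inB_thD.
split; first by apply/branch_eq; rewrite S0 /sgnb /=; ring.
exists (1 / (20 * Tc t0)), (24 / t0 ^+ 2), (1/6).
split; first by rewrite divr_gt0 // mulr_gt0.
split; first by rewrite divr_gt0.
split; first lra.
move=> [p1 p2]; have [v1 [v2 ->]] := shift_pt p1 p2.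
rewrite edist_thD => hd.
have [h1 h2 Dd sq] := @small_pt v1 v2 (1/6) ltac:(lra) hd.
rewrite sq.
have e36 : (1/6 : R) ^+ 2 = 1/36 by rewrite expr2; field.
rewrite e36 in Dd.
have [Gup Glo] := parab_core v1 v2 h1 h2.
have Glo' := Glo (ltW Dd).
move: Gup Glo'.
set D := v1 ^+ 2 + v2 ^+ 2.
set th := (x0 R + v1, - x0 R + v2).
move=> Gup Glo'.
have D0 : 0 <= D by rewrite /D addr_ge0 ?sqr_ge0.
have SSq : SS th ^+ 2 = absF2 th + t0 ^+ 4 by rewrite S_sq k1 mulr1.
have Sg0 := S_ge0 R t0 u th.
have S4 := S_le4 R t0 u th tk.
have h4 : t0 ^+ 4 = t0 ^+ 2 * t0 ^+ 2 by rewrite -exprD.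
have G0 := @absF2_ge0 R th.
have Sge : t0 ^+ 2 <= SS th by rewrite h4 in SSq; nra.
set X := SS th - t0 ^+ 2.
have X0 : 0 <= X by rewrite /X subr_ge0.
have XG : X * (SS th + t0 ^+ 2) = absF2 th.
  have -> : absF2 th = SS th ^+ 2 - t0 ^+ 4 by rewrite SSq addrK.
  by rewrite /X h4; ring.
have -> : br (true, false) th - br (true, false) (thD R) = X / Tc t0.
  by rewrite !branchE S0 /sgnb /= /X; field.
have -> : br (false, true) th - br (false, true) (thD R) = - (X / Tc t0).
  by rewrite !branchE S0 /sgnb /= /X; field.
have -> : br (true, false) th - br (false, true) th = (2 * X) / Tc t0.
  by rewrite !branchE /sgnb /= /X; field.
have up : X <= 24 / t0 ^+ 2 * D.
  rewrite mulrAC ler_pdivlMr //; nra.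
have up' : `|X / Tc t0| <= 24 / t0 ^+ 2 * D.
  by apply: le_trans (divT_le _) _; rewrite ger0_norm.
rewrite normrN; split; first exact: up'.
split; first exact: up'.
rewrite ger0_norm; last by rewrite divr_ge0 // ?mulr_ge0 // ltW.
have -> : 1 / (20 * Tc t0) * D = (D / 20) / Tc t0 by field.
rewrite ler_pM2r ?invr_gt0 //.
have t21 : t0 ^+ 2 < 1 by rewrite exprn_ilt1 // ltW.
have : X * (SS th + t0 ^+ 2) <= X * 5 by rewrite ler_wpM2l //; lra.
lra.
Qed.
End C2.

Theorem mainTheorem2 (R : realType) (t0 ab u : R) :
  0 < t0 < 1 ->
  (forall (th : R * R) (eta : R), inB th ->
     \det (M2AA t0 (alpha_a t0 ab u) ab eta th) = 0 -> `|eta| <= 1) ->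
  (* the dispersion relation consists of the four branches *)
  (forall (th : R * R) (eta : R), inB th ->
     (\det (M2AA t0 (alpha_a t0 ab u) ab eta th) = 0 <->
      exists s : bool * bool, eta = branch t0 ab u s th)) /\
  (* (a) Dirac cones *)
  (alpha_a t0 ab u = ab ->
     exists (s s' : bool * bool) (thD : R * R),
       s != s' /\ dirac_cone (branch t0 ab u s) (branch t0 ab u s') thD) /\
  (* (b) parabolic touches *)
  (alpha_a t0 ab u = - 2 * t0 ^+ 2 + ab \/ alpha_a t0 ab u = 2 * t0 ^+ 2 + ab ->
     exists (s s' : bool * bool) (thP : R * R),
       s != s' /\ parabolic_touch (branch t0 ab u s) (branch t0 ab u s') thP) /\
  (* (c) gaps *)
  (alpha_a t0 ab u < - 2 * t0 ^+ 2 + ab \/ 2 * t0 ^+ 2 + ab < alpha_a t0 ab u ->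
     forall (s s' : bool * bool) (th : R * R),
       s != s' -> inB th -> branch t0 ab u s th != branch t0 ab u s' th) /\
  (* (d) intersections without parabolic or conical touches *)
  (0 < u < 1 -> alpha_a t0 ab u != ab ->
     (exists (s s' : bool * bool) (th : R * R),
        s != s' /\ inB th /\ branch t0 ab u s th = branch t0 ab u s' th) /\
     (forall (s s' : bool * bool) (th : R * R), s != s' ->
        ~ dirac_cone (branch t0 ab u s) (branch t0 ab u s') th /\
        ~ parabolic_touch (branch t0 ab u s) (branch t0 ab u s') th)).
Proof.
move=> tb _; have /andP[t0p t01] := tb.
have t2p : 0 < t0 ^+ 2 by rewrite exprn_gt0.
have t2n : t0 ^+ 2 != 0 by rewrite gt_eqF.
have aE := alpha_aE R t0 ab u.
split; first by move=> th eta _; exact: dispersion.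
split.
  move=> h; apply: (@part_a R t0 ab u t0p).
  have e : t0 ^+ 2 * k R u = 0 by lra.
  by move/eqP: e; rewrite mulf_eq0 (negbTE t2n) /= => /eqP.
split.
  move=> h; apply: (@part_b R t0 ab u tb).
  case: h => h.
  - have e : t0 ^+ 2 * (k R u - 1) = 0 by rewrite mulrBr mulr1; lra.
    move/eqP: e; rewrite mulf_eq0 (negbTE t2n) /= subr_eq0 => /eqP ->.
    by rewrite expr1n.
  - have e : t0 ^+ 2 * (k R u + 1) = 0 by rewrite mulrDr mulr1; lra.
    move/eqP: e; rewrite mulf_eq0 (negbTE t2n) /= addr_eq0 => /eqP ->.
    by rewrite sqrrN expr1n.
split.
  move=> h s s' th ne _; apply: (@part_c R t0 ab u t0p) => //.
  case: h => h.
  - have : t0 ^+ 2 * 1 < t0 ^+ 2 * k R u by lra.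
    rewrite ltr_pM2l // => k1; nra.
  - have : t0 ^+ 2 * k R u < t0 ^+ 2 * (-1) by lra.
    rewrite ltr_pM2l // => k1; nra.
move=> /andP[u0 u1] hne.
have kn : k R u != 0.
  apply: contraNneq hne => k0; rewrite aE k0 mulr0 subr0 //.
have kb : 0 < k R u ^+ 2 < 1.
  apply/andP; split.
    by rewrite lt_neqAle sqr_ge0 andbT eq_sym sqrf_eq0.
  rewrite /k; nra.
split; first exact: (@exists_meet R t0 ab u tb kb).
by move=> s s' th ne; apply: (@no_touch R t0 ab u tb kb s s' th ne).
Qed.
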